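(* Let $A$ be a simple type. For every partial surjection $f \colon Q \twoheadrightarrow Q'$ between finite sets one has $\mathrm{Reg}_{Q'}(A) \subseteq \mathrm{Reg}_{Q}(A)$. The resulting diagram of Boolean algebras $\mathrm{Reg}_{(-)}(A) \colon \mathbf{FinPSurj}^{\mathrm{op}} \to \mathbf{BA}$, sending $Q$ to $\mathrm{Reg}_Q(A)$ and a partial surjection $f \colon Q \twoheadrightarrow Q'$ to the inclusion $\mathrm{Reg}_{Q'}(A) \hookrightarrow \mathrm{Reg}_Q(A)$, is directed, and its colimit in the category $\mathbf{BA}$ of Boolean algebras is the Boolean algebra $\mathrm{Reg}(A)$ (in particular $\mathrm{Reg}(A)$ is a Boolean subalgebra of $\wp(\Lambda(A))$).
   Context: Simple types are generated from a base type $o$ by $A \Rightarrow B$. $\Lambda(A)$ denotes the set of closed simply typed $\lambda$-terms of type $A$ modulo $\beta\eta$-conversion. For a finite set $Q$, define $[\![o]\!]_Q = Q$ and $[\![A \Rightarrow B]\!]_Q$ = the set of all functions $[\![A]\!]_Q \to [\![B]\!]_Q$; each $M \in \Lambda(A)$ has its standard interpretation $[\![M]\!]_Q \in [\![A]\!]_Q$ in this finite set-theoretic model. $\mathrm{Reg}_Q(A) = \{\{M \in \Lambda(A) : [\![M]\!]_Q \in F\} : F \subseteq [\![A]\!]_Q\}$ (a Boolean subalgebra of $\wp(\Lambda(A))$), and $\mathrm{Reg}(A) = \bigcup_{Q \text{ finite}} \mathrm{Reg}_Q(A)$. A partial surjection $f \colon Q \twoheadrightarrow Q'$ is a relation $f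 \subseteq Q \times Q'$ that is the graph of a partial function which is surjective onto $Q'$. $\mathbf{FinPSurj}$ is the category of finite sets and partial surjections. *)

(* Defs.v *)
From HB Require Import structures.
From mathcomp Require Import all_boot all_order.
From mathcomp Require Import boolp classical_sets.

Set Implicit Arguments.
Unset Strict Implicit.
Unset Printing Implicit Defensive.

Local Open Scope classical_set_scope.

Inductive ty : Type := o : ty | arr : ty -> ty -> ty.

Inductive var : list ty -> ty -> Type :=
| vz : forall G A, var (A :: G) A
| vs : forall G A B, var G A -> var (B :: G) A.

Inductive tm (G : list ty) : ty -> Type :=
| Var : forall A, var G A -> tm G A
| Lam : forall A B, tm (A :: G) B -> tm G (arr A B)
| App : forall A B, tm G (arr A B) -> tm G A -> tm G B.

(** Closed terms of type A.  (Lambda(A) is this modulo beta-eta.) *)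
Definition Lambda (A : ty) : Type := tm nil A.

Fixpoint interp (Q : Type) (A : ty) : Type :=
  match A with
  | o => Q
  | arr A B => interp Q A -> interp Q B
  end.

Fixpoint env (Q : Type) (G : list ty) : Type :=
  match G with
  | nil => unit
  | A :: G => (interp Q A * env Q G)%type
  end.

Fixpoint lookup (Q : Type) G A (v : var G A) : env Q G -> interp Q A :=
  match v in var G A return env Q G -> interp Q A with
  | vz _ _ => fun e => fst e
  | vs _ _ _ v => fun e => lookup v (snd e)
  end.

Fixpoint eval (Q : Type) G A (t : tm G A) : env Q G -> interp Q A :=
  match t in tm _ A return env Q G -> interp Q A with
  | Var _ v => fun e => lookup v e
  | Lam _ _ t => fun e => fun x => eval t (x, e)
  | App _ _ t u => fun e => (eval t e) (eval u e)
  end.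

Definition sem (Q : Type) A (M : Lambda A) : interp Q A := eval M tt.

Definition RegQ (Q : finType) (A : ty) : set (set (Lambda A)) :=
  [set S | exists F : set (interp Q A), S = [set M | F (sem Q M)]].
Arguments RegQ : clear implicits.

Definition Reg (A : ty) : set (set (Lambda A)) :=
  [set S | exists Q : finType, RegQ Q A S].
Arguments Reg : clear implicits.

Definition psurj (Q Q' : finType) (f : Q -> option Q') : Prop :=
  forall q' : Q', exists q : Q, f q = Some q'.

Definition bool_subalg (T : Type) (D : set (set T)) : Prop :=
  [/\ D set0, D setT,
      (forall S1 S2, D S1 -> D S2 -> D (S1 `&` S2)),
      (forall S1 S2, D S1 -> D S2 -> D (S1 `|` S2)) &
      (forall S, D S -> D (~` S))].

(** h restricted to the subalgebra D is a Boolean algebra homomorphism into B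
    (Boolean algebras = mathcomp's complemented distributive lattices with
    top and bottom). *)
Definition BAhom_on (T : Type) (D : set (set T)) (disp : Order.disp_t)
    (B : ctbDistrLatticeType disp) (h : set T -> B) : Prop :=
  [/\ h set0 = Order.bottom, h setT = Order.top,
      (forall S1 S2, D S1 -> D S2 -> h (S1 `&` S2) = Order.meet (h S1) (h S2)),
      (forall S1 S2, D S1 -> D S2 -> h (S1 `|` S2) = Order.join (h S1) (h S2)) &
      (forall S, D S -> h (~` S) = Order.compl (h S))].

(* Main.v *)
Require Import Defs.
From HB Require Import structures.
From mathcomp Require Import all_boot all_order.
From mathcomp Require Import boolp classical_sets.

Local Open Scope classical_set_scope.
Section LR.
Variables (Q Q' : finType) (f : Q -> option Q').

Fixpoint LRel (A : ty) : interp Q A -> interp Q' A -> Prop :=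
  match A return interp Q A -> interp Q' A -> Prop with
  | o => fun x y => f x = Some y
  | arr A B => fun g h => forall x y, LRel A x y -> LRel B (g x) (h y)
  end.

Fixpoint inh (q : Q) (A : ty) : interp Q A :=
  match A with o => q | arr _ B => fun _ => inh q B end.

Lemma LRel_fs (q : Q) : psurj f -> forall A,
  (forall x y y', LRel A x y -> LRel A x y' -> y = y') /\
  (forall y, exists x, LRel A x y).
Proof.
move=> hs; elim=> [|A [fA sA] B [fB sB]] /=.
  split; first by move=> x y y' -> [].
  exact: hs.
split.
  move=> g h h' H1 H2; apply: funext => y.
  have [x Hx] := sA y.
  exact: fB _ _ _ (H1 _ _ Hx) (H2 _ _ Hx).
move=> h.
have : forall x, exists z, forall y, LRel A x y -> LRel B z (h y).
  move=> x; case: (pselect (exists y, LRel A x y)) => [[y Hy]|N].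
    have [z Hz] := sB (h y); exists z => y' Hy'.
    by rewrite -(fA _ _ _ Hy Hy').
  by exists (inh q B) => y Hy; case: N; exists y.
move=> /choice [g Hg]; exists g => x y Hxy; exact: Hg.
Qed.

Fixpoint Renv (G : list ty) : env Q G -> env Q' G -> Prop :=
  match G return env Q G -> env Q' G -> Prop with
  | nil => fun _ _ => True
  | A :: G => fun e e' => LRel A e.1 e'.1 /\ Renv G e.2 e'.2
  end.

Lemma lookup_LR G A (v : var G A) : forall e e', Renv G e e' -> LRel A (lookup v e) (lookup v e').
Proof.
elim: v => [G0 A0|G0 A0 B0 v IH] e e' /=; first by case.
by case=> _ H; apply: IH.
Qed.

Lemma eval_LR G A (t : tm G A) : forall e e', Renv G e e' -> LRel A (eval t e) (eval t e').
Proof.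
elim: t => [G0 A0 v|G0 A0 B0 t IH|G0 A0 B0 t IHt u IHu] e e' He /=.
- exact: lookup_LR.
- move=> x y Hxy; exact: (IH (x, e) (y, e') (conj Hxy He)).
- exact: (IHt _ _ He _ _ (IHu _ _ He)).
Qed.

End LR.

Lemma empty_subsing (Q' : Type) : (Q' -> False) -> forall A (x y : interp Q' A), x = y.
Proof.
move=> E; elim=> [|A _ B IHB] /= x y; first by case: (E x).
by apply: funext => z; apply: IHB.
Qed.

Lemma part1 A (Q Q' : finType) (f : Q -> option Q') : psurj f -> RegQ Q' A `<=` RegQ Q A.
Proof.
move=> hs S [F ->].
case: (pselect (exists q' : Q', True)) => [[q' _]|N].
  have [q _] := hs q'.
  have [fu _] := @LRel_fs Q Q' f q hs A.
  exists [set x | exists x', LRel Q Q' f A x x' /\ F x'].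
  apply/predeqP => M /=; split.
    by move=> HF; exists (sem Q' M); split => //; exact: (@eval_LR Q Q' f nil A M tt tt I).
  case=> x' [Hx HF].
  by rewrite /sem (fu _ _ _ (@eval_LR Q Q' f nil A M tt tt I) Hx).
exists [set x | exists M, F (sem Q' M)].
apply/predeqP => M /=; split; first by move=> H; exists M.
case=> M' H; rewrite (@empty_subsing Q' _ A (sem Q' M) (sem Q' M')) //.
by move=> q; apply: N; exists q.
Qed.

Lemma directed (Q1 Q2 : finType) : exists (Q : finType) (f1 : Q -> option Q1) (f2 : Q -> option Q2),
       psurj f1 /\ psurj f2.
Proof.
exists ((option Q1 * option Q2)%type : finType).
exists (fun p => p.1), (fun p => p.2); split.
  by move=> q; exists (Some q, None).
by move=> q; exists (None, Some q).
Qed.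

Lemma common A (Q1 Q2 : finType) S1 S2 : RegQ Q1 A S1 -> RegQ Q2 A S2 ->
  exists Q : finType, RegQ Q A S1 /\ RegQ Q A S2.
Proof.
move=> H1 H2; have [Q [f1 [f2 [h1 h2]]]] := directed Q1 Q2.
by exists Q; split; [exact: part1 h1 _ H1 | exact: part1 h2 _ H2].
Qed.

Arguments common {A Q1 Q2 S1 S2}.

Lemma RegQ0 A (Q : finType) : RegQ Q A set0.
Proof. by exists set0; apply/predeqP. Qed.
Lemma RegQT A (Q : finType) : RegQ Q A setT.
Proof. by exists setT; apply/predeqP. Qed.
Lemma RegQI A (Q : finType) S1 S2 : RegQ Q A S1 -> RegQ Q A S2 -> RegQ Q A (S1 `&` S2).
Proof. by move=> [F1 ->] [F2 ->]; exists (F1 `&` F2); apply/predeqP. Qed.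
Lemma RegQU A (Q : finType) S1 S2 : RegQ Q A S1 -> RegQ Q A S2 -> RegQ Q A (S1 `|` S2).
Proof. by move=> [F1 ->] [F2 ->]; exists (F1 `|` F2); apply/predeqP. Qed.
Lemma RegQC A (Q : finType) S : RegQ Q A S -> RegQ Q A (~` S).
Proof. by move=> [F ->]; exists (~` F); apply/predeqP. Qed.
Arguments RegQI {A Q S1 S2}.
Arguments RegQU {A Q S1 S2}.
Arguments RegQC {A Q S}.

Theorem theoremA (A : ty) :
  (* functoriality: a partial surjection Q -/->> Q' gives Reg_Q'(A) <= Reg_Q(A) *)
  (forall (Q Q' : finType) (f : Q -> option Q'), psurj f -> RegQ Q' A `<=` RegQ Q A)
  /\
  (* directedness of the indexing diagram FinPSurj^op *)
  (forall Q1 Q2 : finType, exists (Q : finType) (f1 : Q -> option Q1) (f2 : Q -> option Q2),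
       psurj f1 /\ psurj f2)
  /\
  (* Reg(A) is a Boolean subalgebra of P(Lambda(A)) *)
  bool_subalg (Reg A)
  /\
  (* the inclusions Reg_Q(A) -> Reg(A) form a cocone *)
  (forall Q : finType, RegQ Q A `<=` Reg A)
  /\
  (* ... which is a colimit in BA: universal property *)
  (forall (disp : Order.disp_t) (B : ctbDistrLatticeType disp)
          (g : forall Q : finType, set (Lambda A) -> B),
     (forall Q : finType, BAhom_on (RegQ Q A) (g Q)) ->
     (forall (Q Q' : finType) (f : Q -> option Q'), psurj f ->
        forall S, RegQ Q' A S -> g Q S = g Q' S) ->
     (exists h : set (Lambda A) -> B,
        BAhom_on (Reg A) h /\
        forall (Q : finType) S, RegQ Q A S -> h S = g Q S)
     /\
     (forall h1 h2 : set (Lambda A) -> B,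
        BAhom_on (Reg A) h1 -> BAhom_on (Reg A) h2 ->
        (forall (Q : finType) S, RegQ Q A S -> h1 S = g Q S) ->
        (forall (Q : finType) S, RegQ Q A S -> h2 S = g Q S) ->
        forall S, Reg A S -> h1 S = h2 S)).
Proof.
have P1 := @part1 A.
have P3 : bool_subalg (Reg A).
  split.
  - by exists bool; apply: RegQ0.
  - by exists bool; apply: RegQT.
  - move=> S1 S2 [Q1 H1] [Q2 H2]; have [Q [K1 K2]] := common H1 H2.
    by exists Q; apply: RegQI.
  - move=> S1 S2 [Q1 H1] [Q2 H2]; have [Q [K1 K2]] := common H1 H2.
    by exists Q; apply: RegQU.
  - by move=> S [Q H]; exists Q; apply: RegQC.
split; first exact: P1.
split; first exact: directed.
split; first exact: P3.
split; first by move=> Q S H; exists Q.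
move=> disp B g Hg Hc; split; last first.
  move=> h1 h2 _ _ E1 E2 S [Q H]; by rewrite (E1 Q S H) (E2 Q S H).
have wd : forall (Q1 Q2 : finType) S, RegQ Q1 A S -> RegQ Q2 A S -> g Q1 S = g Q2 S.
  move=> Q1 Q2 S H1 H2; have [Q [f1 [f2 [h1 h2]]]] := directed Q1 Q2.
  by rewrite -(Hc _ _ _ h1 _ H1) (Hc _ _ _ h2 _ H2).
have : forall S : set (Lambda A), exists b : B, forall Q : finType, RegQ Q A S -> b = g Q S.
  move=> S; case: (pselect (exists Q : finType, RegQ Q A S)) => [[Q0 H0]|N].
    by exists (g Q0 S) => Q H; apply: wd.
  by exists Order.bottom => Q H; case: N; exists Q.
move=> /choice [h Hh]; exists h; split; last by move=> Q S H; exact: Hh.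
split.
- have [+ _ _ _ _] := Hg bool; move=> <-; exact: (Hh set0 bool (RegQ0 A bool)).
- have [_ + _ _ _] := Hg bool; move=> <-; exact: (Hh setT bool (RegQT A bool)).
- move=> S1 S2 [Q1 H1] [Q2 H2]; have [Q [K1 K2]] := common H1 H2.
  have [_ _ hm _ _] := Hg Q.
  by rewrite (Hh _ Q (RegQI K1 K2)) (Hh _ Q K1) (Hh _ Q K2) hm.
- move=> S1 S2 [Q1 H1] [Q2 H2]; have [Q [K1 K2]] := common H1 H2.
  have [_ _ _ hj _] := Hg Q.
  by rewrite (Hh _ Q (RegQU K1 K2)) (Hh _ Q K1) (Hh _ Q K2) hj.
- move=> S [Q H]; have [_ _ _ _ hc] := Hg Q.
  by rewrite (Hh _ Q (RegQC H)) (Hh _ Q H) hc.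
Qed.
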